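(* Let $G$ be a connected graph with no isolated vertices and with $\gamma(G)>1$. Then $$\gamma_t(G) \le \gamma(G) + \tfrac{1}{2}\gamma_c(G).$$ Moreover, this bound is tight: there exists such a graph attaining equality.
   Context: All graphs are finite, simple and undirected. A set $S\subseteq V(G)$ is a dominating set if every vertex not in $S$ is adjacent to some vertex of $S$; $\gamma(G)$ is the minimum size of a dominating set. A set $S$ is a total dominating set if every vertex of $G$ (including those in $S$) is adjacent to some vertex of $S$; $\gamma_t(G)$ is the minimum size of a total dominating set (it exists iff $G$ has no isolated vertices). A set $S$ is a connected dominating set if it is dominating and the subgraph induced by $S$ is connected; $\gamma_c(G)$ is the minimum size of a connected dominating set (it exists iff $G$ is connected). ''Isolated-free'' means having no isolated vertices. *)

(* Defs.v *)
From mathcomp Require Import all_boot.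
Set Implicit Arguments. Unset Strict Implicit. Unset Printing Implicit Defensive.

Definition simple_graph (T : finType) (e : rel T) : Prop :=
  symmetric e /\ irreflexive e.

Definition isolated_free (T : finType) (e : rel T) : Prop :=
  forall x : T, exists y : T, e x y.

Definition connected_graph (T : finType) (e : rel T) : Prop :=
  forall x y : T, connect e x y.

Definition dominating (T : finType) (e : rel T) (S : {set T}) : bool :=
  [forall x, (x \notin S) ==> [exists y in S, e x y]].

Definition total_dominating (T : finType) (e : rel T) (S : {set T}) : bool :=
  [forall x, [exists y in S, e x y]].

Definition induced_connected (T : finType) (e : rel T) (S : {set T}) : bool :=
  (S != set0) &&
  [forall x in S, forall y in S,
     connect [rel u v | [&& e u v, u \in S & v \in S]] x y].

Definition connected_dominating (T : finType) (e : rel T) (S : {set T}) : bool :=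
  dominating e S && induced_connected e S.

(* minimum cardinality of a set satisfying P (defaults to #|T| if none,
   which never happens under the hypotheses used) *)
Definition min_card (T : finType) (P : {set T} -> bool) : nat :=
  \big[minn/#|T|]_(S : {set T} | P S) #|S|.

Definition gamma (T : finType) (e : rel T) : nat := min_card (dominating e).
Definition gamma_t (T : finType) (e : rel T) : nat := min_card (total_dominating e).
Definition gamma_c (T : finType) (e : rel T) : nat := min_card (connected_dominating e).

(* Main.v *)
Require Import Defs.
From mathcomp Require Import all_boot.
From mathcomp Require Import zify.
Set Implicit Arguments. Unset Strict Implicit. Unset Printing Implicit Defensive.

Lemma min_card_le (T : finType) (P : {set T} -> bool) S : P S -> min_card P <= #|S|.
Proof.
move=> PS; rewrite /min_card.
have : S \in index_enum {set T} by rewrite mem_index_enum.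
elim: (index_enum {set T}) => [//|a s IH]; rewrite inE big_cons.
case/orP => [/eqP <-|Ss]; first by rewrite PS geq_minl.
case: (P a); last exact: IH.
by rewrite geq_min IH ?orbT.
Qed.

Lemma min_card_attained (T : finType) (P : {set T} -> bool) S1 :
  P S1 -> exists2 S, P S & min_card P = #|S|.
Proof.
move=> PS1.
case: (arg_minnP (fun S : {set T} => #|S|) PS1) => S0 PS0 H.
exists S0 => //; apply/eqP; rewrite eqn_leq min_card_le //=.
rewrite /min_card; apply: (big_ind (fun m => #|S0| <= m)).
- exact: max_card.
- by move=> a b Ha Hb; rewrite leq_min Ha Hb.
- by move=> S PS; apply: H.
Qed.

Lemma connect_step (T : finType) (r : rel T) x y :
  connect r x y -> x != y -> exists z, r x z.
Proof.
move/connectP=> [[|z p] /= Hp ->]; first by rewrite eqxx.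
by case/andP: Hp => Hz _ _; exists z.
Qed.

Lemma part1 (T : finType) (e : rel T) :
  simple_graph e -> connected_graph e -> isolated_free e -> 1 < gamma e ->
  2 * gamma_t e <= 2 * gamma e + gamma_c e.
Proof.
move=> [esym eirr] econ eiso g1.
have [D domD gD] : exists2 D, dominating e D & gamma e = #|D|.
  apply: (@min_card_attained _ _ setT); apply/forallP => x; by rewrite in_setT.
have [x0 _] : exists x0 : T, true.
  case: (pickP (fun _ : T => true)) => [x0 _|H]; first by exists x0.
  have : dominating e set0 by apply/forallP => x; have := H x.
  by move/(min_card_le (P := dominating e)); rewrite cards0 -/(gamma e) leqn0 => /eqP; move: g1 => /[swap] ->.
have cdT : connected_dominating e setT.
  apply/andP; split; first by apply/forallP => x; rewrite in_setT.
  apply/andP; split; first by apply/set0Pn; exists x0; rewrite in_setT.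
  apply/forallP => x; apply/implyP => _; apply/forallP => y; apply/implyP => _.
  rewrite (@eq_connect _ _ e); first exact: econ.
  by move=> u v /=; rewrite !in_setT !andbT.
have [C cdC gC] := min_card_attained cdT.
case/andP: cdC => domC /andP [C0 Ccon].
have gleC : gamma e <= #|C| by exact: min_card_le.
have t1 : gamma_t e <= #|C|.
  apply: min_card_le; apply/forallP => x.
  case: (boolP (x \in C)) => xC; last first.
    by move/forallP: domC => /(_ x) /implyP /(_ xC).
  have [y yC yx] : exists2 y, y \in C & y != x.
    case: (pickP (fun y => (y \in C) && (y != x))) => [y /andP [? ?]|H]; first by exists y.
    have : C \subset [set x].
      apply/subsetP => y yC; rewrite in_set1; apply/negPn/negP => yx.
      by have := H y; rewrite yC yx.
    move/subset_leq_card; rewrite cards1 => Cle.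
    by move: (leq_ltn_trans gleC (leq_ltn_trans Cle g1)); rewrite ltnn.
  move/forallP: Ccon => /(_ x) /implyP /(_ xC) /forallP /(_ y) /implyP /(_ yC) Hc.
  have xy : x != y by rewrite eq_sym.
  have [z /= /and3P [exz _ zC]] := connect_step Hc xy.
  by apply/existsP; exists z; rewrite zC exz.
pose f := fun x => odflt x [pick y | e x y].
have fP : forall x, e x (f x).
  move=> x; rewrite /f; case: pickP => [y //|H /=].
  by have [y exy] := eiso x; have := H y; rewrite exy.
have t2 : gamma_t e <= 2 * #|D|.
  apply: (@leq_trans #|D :|: f @: D|).
    apply: min_card_le; apply/forallP => x.
    case: (boolP (x \in D)) => xD.
      by apply/existsP; exists (f x); rewrite fP andbT in_setU imset_f ?orbT.
    move/forallP: domD => /(_ x) /implyP /(_ xD) /existsP [y /andP [yD exy]].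
    by apply/existsP; exists y; rewrite in_setU yD.
  apply: (leq_trans (leq_card_setU _ _)).
  by rewrite mul2n -addnn leq_add2l leq_imset_card.
rewrite gD /gamma_c gC; lia.
Qed.
Definition eP : rel 'I_6 := fun x y => (x.+1 == y :> nat) || (y.+1 == x :> nat).
Definition vv (k : nat) : 'I_6 := inord k.

Lemma vvE k : k < 6 -> nat_of_ord (vv k) = k.
Proof. by move=> h; rewrite /vv inordK. Qed.

Lemma path_conn (r : rel 'I_6) lo hi : symmetric r ->
  (forall n, lo < n <= hi -> r (vv n) (vv n.-1)) ->
  forall x y : 'I_6, lo <= x <= hi -> lo <= y <= hi -> connect r x y.
Proof.
move=> rs H.
suff K : forall x : 'I_6, lo <= x <= hi -> connect r x (vv lo).
  move=> x y hx hy; apply: connect_trans (K x hx) _.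
  by rewrite (sym_connect_sym rs); apply: K.
move=> x; rewrite -(inord_val x); have := ltn_ord x.
elim: (nat_of_ord x) => [|n IH] hn hx.
  by rewrite inordK // in hx; have -> : lo = 0 by lia; exact: connect0.
case: (eqVneq lo n.+1) => [->|ne]; first exact: connect0.
apply: connect_trans (connect1 (H n.+1 _)) _; first by rewrite inordK // in hx; lia.
apply: IH; first lia.
rewrite inordK // in hx; rewrite inordK; lia.
Qed.

Lemma eP_simple : simple_graph eP.
Proof.
split; first by move=> x y; rewrite /eP orbC.
by move=> x; rewrite /eP; apply/negP; lia.
Qed.

Lemma eP_conn : connected_graph eP.
Proof.
move=> x y; apply: (path_conn (lo := 0) (hi := 5)).
- by move=> u v; rewrite /eP orbC.
- by move=> n hn; rewrite /eP !vvE; lia.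
- by have := ltn_ord x; lia.
- by have := ltn_ord y; lia.
Qed.

Lemma eP_iso : isolated_free eP.
Proof.
move=> x; have := ltn_ord x => hx.
case: (ltnP x 5) => h.
  by exists (vv x.+1); rewrite /eP vvE //; lia.
by exists (vv x.-1); rewrite /eP vvE //; lia.
Qed.

Lemma uniq_card (S : {set 'I_6}) (s : seq 'I_6) : uniq s -> all (mem S) s -> size s <= #|S|.
Proof.
move=> us /allP al; rewrite cardE; apply: uniq_leq_size => // z zs.
by rewrite mem_enum; apply: al.
Qed.

Lemma gamma_ge : 1 < gamma eP.
Proof.
have dT : dominating eP setT by apply/forallP => x; rewrite in_setT.
rewrite /gamma; have [S domS ->] := min_card_attained dT.
have [p pS hp] : exists2 p, p \in S & nat_of_ord p <= 1.
  case: (boolP (vv 0 \in S)) => h0; first by exists (vv 0) => //; rewrite vvE.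
  move/forallP: domS => /(_ (vv 0)) /implyP /(_ h0) /existsP [y /andP [yS ey]].
  by exists y => //; move: ey; rewrite /eP vvE //; lia.
have [q qS hq] : exists2 q, q \in S & 4 <= nat_of_ord q.
  case: (boolP (vv 5 \in S)) => h0; first by exists (vv 5) => //; rewrite vvE.
  move/forallP: domS => /(_ (vv 5)) /implyP /(_ h0) /existsP [y /andP [yS ey]].
  by exists y => //; move: ey; rewrite /eP vvE //; have := ltn_ord y; lia.
apply: (@uniq_card S [:: p; q]); last by rewrite /= pS qS.
by rewrite /= inE andbT -!(inj_eq val_inj) /=; lia.
Qed.

Lemma gamma_le : gamma eP <= 2.
Proof.
apply: (@leq_trans #|[set vv 1; vv 4]|); last first.
  by rewrite cards2; case: (_ != _).
apply: min_card_le; apply/forallP => x; apply/implyP.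
rewrite !inE -!(inj_eq val_inj) /= !vvE // => hx.
have := ltn_ord x => hx6.
case: (leqP x 2) => h.
  by apply/existsP; exists (vv 1); rewrite !inE eqxx /= /eP vvE //; lia.
by apply/existsP; exists (vv 4); rewrite !inE eqxx orbT /= /eP vvE //; lia.
Qed.

Lemma gamma_t_ge : 4 <= gamma_t eP.
Proof.
have tT : total_dominating eP setT.
  by apply/forallP => x; have [y h] := eP_iso x; apply/existsP; exists y; rewrite in_setT.
rewrite /gamma_t; have [S tS ->] := min_card_attained tT.
move/forallP: tS => tS.
have [a aS ha] : exists2 a, a \in S & nat_of_ord a = 1.
  have /existsP [y /andP [yS ey]] := tS (vv 0).
  by exists y => //; move: ey; rewrite /eP vvE //; lia.
have [b bS hb] : exists2 a, a \in S & nat_of_ord a = 4.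
  have /existsP [y /andP [yS ey]] := tS (vv 5).
  by exists y => //; move: ey; rewrite /eP vvE //; have := ltn_ord y; lia.
have [c cS hc] : exists2 a, a \in S & (nat_of_ord a == 0) || (nat_of_ord a == 2).
  have /existsP [y /andP [yS ey]] := tS (vv 1).
  by exists y => //; move: ey; rewrite /eP vvE //; lia.
have [d dS hd] : exists2 a, a \in S & (nat_of_ord a == 3) || (nat_of_ord a == 5).
  have /existsP [y /andP [yS ey]] := tS (vv 4).
  by exists y => //; move: ey; rewrite /eP vvE //; lia.
apply: (@uniq_card S [:: a; b; c; d]); last by rewrite /= aS bS cS dS.
by rewrite /= !inE -!(inj_eq val_inj) /=; lia.
Qed.

Definition S4 : {set 'I_6} := [set vv 1; vv 2; vv 3; vv 4].

Lemma S4E x : (x \in S4) = (1 <= nat_of_ord x <= 4).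
Proof.
have := ltn_ord x => hx.
by rewrite !inE -!(inj_eq val_inj) /= !vvE //; lia.
Qed.

Lemma S4card : #|S4| <= 4.
Proof.
apply: (@leq_trans #|[:: vv 1; vv 2; vv 3; vv 4]|); last exact: card_size.
apply: subset_leq_card; apply/subsetP => x; rewrite S4E !inE -!(inj_eq val_inj) /= !vvE //.
lia.
Qed.

Lemma gamma_c_le : gamma_c eP <= 4.
Proof.
apply: (leq_trans _ S4card); apply: min_card_le.
apply/andP; split.
  apply/forallP => x; apply/implyP; rewrite S4E => hx.
  have := ltn_ord x => hx6.
  case: (leqP x 0) => h.
    by apply/existsP; exists (vv 1); rewrite S4E /eP vvE //; lia.
  by apply/existsP; exists (vv 4); rewrite S4E /eP vvE //; lia.
apply/andP; split.
  by apply/set0Pn; exists (vv 1); rewrite S4E vvE.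
apply/forallP => x; apply/implyP => hx; apply/forallP => y; apply/implyP => hy.
apply: (path_conn (lo := 1) (hi := 4)).
- move=> u v /=; rewrite /eP orbC; congr (_ && _); exact: andbC.
- by move=> n hn; rewrite /= !S4E /eP !vvE; lia.
- by rewrite -S4E.
- by rewrite -S4E.
Qed.

Theorem theorem2p1 :
  (forall (T : finType) (e : rel T),
      simple_graph e -> connected_graph e -> isolated_free e -> 1 < gamma e ->
      2 * gamma_t e <= 2 * gamma e + gamma_c e)
  /\
  (exists (T : finType) (e : rel T),
      [/\ simple_graph e, connected_graph e, isolated_free e, 1 < gamma e &
          2 * gamma_t e = 2 * gamma e + gamma_c e]).
Proof.
split; first exact: part1.
exists _, eP; split.
- exact: eP_simple.
- exact: eP_conn.
- exact: eP_iso.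
- exact: gamma_ge.
have := part1 eP_simple eP_conn eP_iso gamma_ge.
have := gamma_le; have := gamma_t_ge; have := gamma_c_le.
lia.
Qed.
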